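(* Let $d\ge3$, $\mathcal D=\mathbb S_1^{d-1}$, $M\in\mathrm{SL}(d+1,\mathbb R)$, $K=\mathcal G_{\mathcal D}(M)$, and let $(u_1,\vec v_1),\dots,(u_K,\vec v_K)\in\mathcal Q_{\mathcal D}(M)$ satisfy (V1)–(V3). If $(u,\vec v)\in\mathcal Q_{\mathcal D}(M)$ with $u\in(-1/2,1/2)$, then $|\vec v_K|\le|\vec v|$. Consequently, if $u_i\in(-1/2,1/2)$ for some $1\le i\le K$, then $i=K$.
   Context: $\mathbb S_1^{d-1}$ is the unit sphere. Row vectors in $\mathbb R^{d+1}$ are written $(u,\vec v)$, $u\in\mathbb R$, $\vec v\in\mathbb R^d$; $\mathbb Z^{d+1}M=\{\vec mM:\vec m\in\mathbb Z^{d+1}\}$. For $\mathcal D\subseteq\mathbb S_1^{d-1}$: $\mathcal Q_{\mathcal D}(M,t)=\{(u,\vec v)\in\mathbb Z^{d+1}M:-t<u<1-t,\ \vec v\in\mathbb R_{>0}\mathcal D\}$ for $t\in(0,1)$; $\mathcal Q_{\mathcal D}(M)=\{(u,\vec v)\in\mathbb Z^{d+1}M:|u|<1,\ \vec v\in\mathbb R_{>0}\mathcal D\}$; $F_{\mathcal D}(M,t)=\min\{|\vec v|:(u,\vec v)\in\mathcal Q_{\mathcal D}(M,t)\}$; $\mathcal F_{\mathcal D}(M)=\{F_{\mathcal D}(M,t):0<t<1\}$, $\mathcal G_{\mathcal D}(M)=|\mathcal F_{\mathcal D}(M)|$. Conditions: (V1) $0<|\vec v_1|<\cdots<|\vec v_K|$;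 (V2) each $\delta\in\mathcal F_{\mathcal D}(M)$ equals $|\vec v_i|$ for some $i$; (V3) for each $i$ there is $t\in(0,1)$ with $(u_i,\vec v_i)\in\mathcal Q_{\mathcal D}(M,t)$ and $|\vec v_i|=F_{\mathcal D}(M,t)$. *)

(* Defs.v *)
From HB Require Import structures.
From mathcomp Require Import all_boot all_order all_algebra.
From mathcomp Require Import reals.
Set Implicit Arguments. Unset Strict Implicit. Unset Printing Implicit Defensive.
Import Order.TTheory GRing.Theory Num.Theory.
Local Open Scope ring_scope.

Section Defs.
Variable R : realType.

Definition enorm (d : nat) (v : 'rV[R]_d) : R := Num.sqrt (\sum_i (v 0 i) ^+ 2).

Definition unit_sphere (d : nat) : 'rV[R]_d -> Prop := fun w => enorm w = 1.

Definition pos_cone (d : nat) (D : 'rV[R]_d -> Prop) (v : 'rV[R]_d) : Prop :=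
  exists r : R, 0 < r /\ exists w, D w /\ v = r *: w.

Definition in_lattice (d : nat) (M : 'M[R]_(1 + d)) (u : R) (v : 'rV[R]_d) : Prop :=
  exists m : 'rV[int]_(1 + d),
    row_mx (u%:M : 'M[R]_1) v = map_mx (fun z : int => z%:~R) m *m M.

Definition QDt (d : nat) (D : 'rV[R]_d -> Prop) (M : 'M[R]_(1 + d)) (t : R)
    (u : R) (v : 'rV[R]_d) : Prop :=
  in_lattice M u v /\ - t < u /\ u < 1 - t /\ pos_cone D v.

Definition QD (d : nat) (D : 'rV[R]_d -> Prop) (M : 'M[R]_(1 + d))
    (u : R) (v : 'rV[R]_d) : Prop :=
  in_lattice M u v /\ `|u| < 1 /\ pos_cone D v.

(* "F_D(M, t) = delta": delta is the minimum of |v| over Q_D(M, t)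
   (the minimum exists and equals delta) *)
Definition is_FD (d : nat) (D : 'rV[R]_d -> Prop) (M : 'M[R]_(1 + d)) (t delta : R)
    : Prop :=
  (exists u v, QDt D M t u v /\ enorm v = delta) /\
  (forall u v, QDt D M t u v -> delta <= enorm v).

Definition FDset (d : nat) (D : 'rV[R]_d -> Prop) (M : 'M[R]_(1 + d)) (delta : R)
    : Prop :=
  exists t : R, 0 < t /\ t < 1 /\ is_FD D M t delta.

Definition has_card (A : R -> Prop) (n : nat) : Prop :=
  exists s : seq R, uniq s /\ size s = n /\ (forall x, x \in s <-> A x).

End Defs.

(* Main.v *)
Require Import Defs.
From HB Require Import structures.
From mathcomp Require Import all_boot all_order all_algebra.
From mathcomp Require Import reals boolp zify lra.
Import Order.TTheory GRing.Theory Num.Theory.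
Local Open Scope ring_scope.

Section H.
Variable R : realType.
Local Set Implicit Arguments.

Lemma le_sum_term n (F : 'I_n -> R) :
  (forall i, 0 <= F i) -> forall i, F i <= \sum_j F j.
Proof.
move=> F0 i; rewrite (bigD1 i) //= lerDl; exact: sumr_ge0.
Qed.

Lemma abs_le_enorm d (v : 'rV[R]_d) i : `|v 0 i| <= enorm v.
Proof.
rewrite /enorm -sqrtr_sqr ler_sqrt; last by apply: sumr_ge0 => j _; exact: sqr_ge0.
by rewrite (bigD1 i) //= lerDl; apply: sumr_ge0 => j _; exact: sqr_ge0.
Qed.

Lemma enormN d (v : 'rV[R]_d) : enorm (- v) = enorm v.
Proof. by rewrite /enorm; congr Num.sqrt; apply: eq_bigr => j _; rewrite mxE sqrrN. Qed.

Lemma enorm_ge0 d (v : 'rV[R]_d) : 0 <= enorm v.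
Proof. exact: sqrtr_ge0. Qed.

Lemma seq_min (T : eqType) (f : T -> R) (s : seq T) x0 :
  x0 \in s -> exists2 x, x \in s & forall y, y \in s -> f x <= f y.
Proof.
elim: s x0 => [//|a s IH] x0 _.
case: s IH => [|b s] IH.
  by exists a; rewrite ?mem_head // => y; rewrite inE => /eqP ->.
have [x xs xmin] := IH b (mem_head _ _).
have [le|lt] := leP (f a) (f x).
  exists a; first exact: mem_head.
  move=> y; rewrite inE => /orP[/eqP ->//|ys]; exact: le_trans le (xmin _ ys).
exists x; first by rewrite inE xs orbT.
move=> y; rewrite inE => /orP[/eqP ->|ys]; [exact: ltW|exact: xmin].
Qed.


Lemma int_enc (m : int) (N : nat) : `|m| <= N%:Z ->
  (absz (m + N%:Z)%R < N.*2.+1)%N /\ m = (absz (m + N%:Z))%:Z - N%:Z.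
Proof. move=> h. lia. Qed.

Lemma exists_FD d (D : 'rV[R]_d -> Prop) (M : 'M[R]_(1+d)) t u v :
  \det M != 0 -> 0 < t -> t < 1 -> QDt D M t u v -> exists delta, is_FD D M t delta.
Proof.
move=> hdet t0 t1 hq.
have [[m0 hm0] [hu1 [hu2 _]]] := hq.
pose pt := fun m : 'rV[int]_(1+d) => map_mx (fun z : int => z%:~R) m *m M.
pose E := enorm v.
pose Mi := invmx M.
pose C := \sum_k \sum_j `|Mi k j|.
pose N := Num.Def.archi_bound ((1+E)*C).
have E0 : 0 <= E := enorm_ge0 v.
have C0 : 0 <= C by apply: sumr_ge0 => k _; apply: sumr_ge0 => j _; exact: normr_ge0.
have hN : (1+E)*C <= N%:R.
  apply: ltW; apply: archi_boundP; apply: mulr_ge0 => //; lra.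
pose L := [seq \row_j (((f j : nat)%:Z - N%:Z) : int) | f : {ffun 'I_(1+d) -> 'I_(N.*2.+1)} <- enum {ffun 'I_(1+d) -> 'I_(N.*2.+1)}].
have inL : forall m u' v', pt m = row_mx (u'%:M) v' -> `|u'| < 1 -> enorm v' <= E -> m \in L.
  move=> m u' v' hm hu hv.
  have hmR : map_mx (fun z : int => z%:~R) m = pt m *m Mi.
    by rewrite /pt /Mi mulmxK // unitmxE unitfE.
  have bnd : forall j, `|m 0 j| <= N%:Z.
    move=> j; rewrite -(ler_int R) intr_norm.
    have -> : (m 0 j)%:~R = map_mx (fun z : int => z%:~R) m 0 j :> R by rewrite mxE.
    rewrite hmR mxE.
    apply: le_trans (ler_norm_sum _ _ _) _.
    apply: (@le_trans _ _ (\sum_k (1+E) * `|Mi k j|)).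
      apply: ler_sum => k _; rewrite normrM ler_wpM2r //.
      rewrite hm -(splitK k); case: (split k) => k' /=.
        rewrite row_mxEl (ord1 k') mxE eqxx mulr1n; lra.
      rewrite row_mxEr; have := abs_le_enorm v' k'; lra.
    rewrite -mulr_sumr; apply: le_trans hN.
    apply: ler_wpM2l; first lra.
    apply: ler_sum => k _.
    exact: (le_sum_term (fun j => `|Mi k j|)).
  apply/mapP; exists [ffun j => inord (absz (m 0 j + N%:Z)%R)]; first by rewrite mem_enum.
  apply/rowP => j; rewrite !mxE ffunE; have := bnd j; move/int_enc => [h1 h2].
  by rewrite inordK.
have ptK : forall m u' v', pt m = row_mx (u'%:M) v' ->
    (lsubmx (pt m)) 0 0 = u' /\ rsubmx (pt m) = v'.
  by move=> m u' v' ->; rewrite row_mxKl row_mxKr mxE eqxx mulr1n.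
pose S := filter (fun m => `[< QDt D M t ((lsubmx (pt m)) 0 0) (rsubmx (pt m)) >]) L.
have m0S : m0 \in S.
  rewrite mem_filter; have [-> ->] := ptK m0 u v (esym hm0).
  apply/andP; split; first exact/asboolP.
  apply: (inL m0 u v (esym hm0)) => //; rewrite ltr_norml; lra.
have [ms msS msmin] := @seq_min _ (fun m : 'rV[int]_(1+d) => enorm (rsubmx (pt m))) _ _ m0S.
exists (enorm (rsubmx (pt ms))); split.
  move: msS; rewrite mem_filter => /andP[/asboolP q _].
  by exists ((lsubmx (pt ms)) 0 0), (rsubmx (pt ms)).
move=> u' v' hq'.
have [[m' hm'] [h1 [h2 _]]] := hq'.
have [hE|hE] := leP E (enorm v').
  apply: le_trans (msmin _ m0S) _.
  by have [_ ->] := ptK m0 u v (esym hm0).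
have m'S : m' \in S.
  rewrite mem_filter; have [-> ->] := ptK m' u' v' (esym hm').
  apply/andP; split; first exact/asboolP.
  apply: (inL m' u' v' (esym hm')); last exact: ltW.
  rewrite ltr_norml; lra.
apply: le_trans (msmin _ m'S) _.
by have [_ ->] := ptK m' u' v' (esym hm').
Qed.

Lemma QDt_neg d (M : 'M[R]_(1+d)) t u v :
  QDt (@unit_sphere R d) M t u v ->
  in_lattice M (- u) (- v) /\ pos_cone (@unit_sphere R d) (- v).
Proof.
move=> [[m hm] [_ [_ [r [hr [w [hw hv]]]]]]]; split.
  exists (- m).
  have -> : map_mx (fun z : int => z%:~R) (- m) = - map_mx (fun z : int => z%:~R) m :> 'M[R]_(1, 1+d).
    by apply/matrixP => i j; rewrite !mxE intrN.
  rewrite mulNmx -hm opp_row_mx; congr row_mx.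
  by apply/matrixP => i j; rewrite !mxE mulNrn.
exists r; split => //; exists (- w); split; last by rewrite hv scalerN.
by rewrite /unit_sphere enormN.
Qed.

End H.

Theorem proposition6p2 (R : realType) (d : nat) (M : 'M[R]_(1 + d)) (K : nat)
    (us : nat -> R) (vs : nat -> 'rV[R]_d) :
  (3 <= d)%N ->
  \det M = 1 ->
  has_card (FDset (@unit_sphere R d) M) K ->
  (forall i, (1 <= i <= K)%N -> QD (@unit_sphere R d) M (us i) (vs i)) ->
  (* (V1) *)
  ((0 < K)%N -> 0 < enorm (vs 1%N)) ->
  (forall i, (1 <= i < K)%N -> enorm (vs i) < enorm (vs i.+1)) ->
  (* (V2) *)
  (forall delta, FDset (@unit_sphere R d) M delta ->
     exists i, (1 <= i <= K)%N /\ delta = enorm (vs i)) ->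
  (* (V3) *)
  (forall i, (1 <= i <= K)%N -> exists t : R, 0 < t /\ t < 1 /\
     QDt (@unit_sphere R d) M t (us i) (vs i) /\
     is_FD (@unit_sphere R d) M t (enorm (vs i))) ->
  (forall (u : R) (v : 'rV[R]_d), QD (@unit_sphere R d) M u v ->
     - (1 / 2) < u -> u < 1 / 2 -> enorm (vs K) <= enorm v) /\
  (forall i, (1 <= i <= K)%N -> - (1 / 2) < us i -> us i < 1 / 2 -> i = K).
Proof.
move=> _ hdet _ hQD _ hinc hV2 hV3.
have part1 : forall (u : R) (v : 'rV[R]_d), QD (@unit_sphere R d) M u v ->
     - (1 / 2) < u -> u < 1 / 2 -> enorm (vs K) <= enorm v.
  move=> u v [hl [hu hc]] ul uh.
  have hq : QDt (@unit_sphere R d) M (1/2) u v by split => //; split; [lra|split; [lra|]].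
  have [delta hd] : exists delta, is_FD (@unit_sphere R d) M (1/2) delta.
    apply: exists_FD hq; [by rewrite hdet oner_neq0|lra|lra].
  have hF : FDset (@unit_sphere R d) M delta.
    by exists (1/2); split; [lra|split; [lra|exact: hd]].
  have [i [hi _]] := hV2 delta hF.
  have hK : (1 <= K <= K)%N by apply/andP; split; [lia|].
  have [t [t0 [t1 [_ [_ hmin]]]]] := hV3 K hK.
  have [ht|ht] := boolP ((- t < u) && (u < 1 - t)).
    move/andP: ht => [ht1 ht2]; apply: (hmin u); split => //; split => //; split => //.
  have [hl' hc'] := QDt_neg hq.
  rewrite -(enormN _ v); apply: (hmin (- u)); split => //.
  split; [|split; [|done]]; move: ht; rewrite negb_and -!leNgt => /orP[] ht; lra.
split => // i /andP[i1 iK] l h.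
have := part1 _ _ (hQD i (introT andP (conj i1 iK))) l h.
case: (ltngtP i K) => //; last lia.
move=> iK' hle; exfalso.
have chain : forall j, (i < j <= K)%N -> enorm (vs i) < enorm (vs j).
  elim => [|j IH] /andP[hij hjK]; first by [].
  have hj : enorm (vs j) < enorm (vs j.+1) by apply: hinc; lia.
  have [eij|nij] := eqVneq i j; first by rewrite eij.
  apply: lt_trans hj; apply: IH; lia.
have := chain K (introT andP (conj iK' (leqnn K))); lra.
Qed.
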